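(* Let $F$ be the unique series in $\mathbb{Q}[x,\bar x,y,\bar y][[t]]$ satisfying $(1-St)F=\bar x\bar y-\bar x t[x^0]F-\bar y t[y^0]F$, and write $F(1,1,t)=\sum_{n\ge0}a_nt^n$ (so $a_n$ is the total number of $n$-step walks in the associated model). Then for all $n\ge0$, $$(n+2)(n+4)(n+6)(n^2+2n-1)\,a_{n+2}-4(n+3)(2n^3+9n^2+4n-18)\,a_{n+1}-16(n+1)(n+2)(n+3)(n^2+4n+2)\,a_n=0.$$
   Context: Notation: $\bar x=x^{-1}$, $\bar y=y^{-1}$, $S=x+y+\bar x+\bar y$; for $G=\sum c_{i,j,n}x^iy^jt^n$, $[x^0]G=\sum_{j,n}c_{0,j,n}y^jt^n$ and $[y^0]G=\sum_{i,n}c_{i,0,n}x^it^n$. $F$ counts walks in $\mathbb{Z}^2$ with unit steps $(\pm1,0),(0,\pm1)$ starting at $(-1,-1)$ that never take a west step from a point on the $y$-axis nor a south step from a point on the $x$-axis; $a_n$ is the number of such walks of length $n$. *)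

(* Defs.v *)
From HB Require Import structures.
From mathcomp Require Import all_boot all_order all_algebra.
Set Implicit Arguments. Unset Strict Implicit. Unset Printing Implicit Defensive.
Import Order.TTheory GRing.Theory Num.Theory.
Local Open Scope ring_scope.

(* Work over Q = rat.  A series G = \sum_n G_n t^n in Q[x,xbar,y,ybar][[t]]
   is encoded by its coefficient array: [Fcoef n i j] is the coefficient of
   x^i y^j t^n in F (i j : int).

   The functional equation  (1 - S t) F = xbar ybar - xbar t [x^0]F - ybar t [y^0]F
   is equivalent, coefficientwise in t, to
     F_0     = xbar ybar,
     F_{n+1} = S F_n - xbar [x^0]F_n - ybar [y^0]F_n ,
   which determines F uniquely.  Taking the coefficient of x^i y^j:
     [x^i y^j] (x F_n)    = F_n(i-1, j)
     [x^i y^j] (xbar F_n) = F_n(i+1, j)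
     [x^i y^j] (xbar [x^0]F_n) = (i == -1) * F_n(0, j)
     [x^i y^j] (ybar [y^0]F_n) = (j == -1) * F_n(i, 0). *)
Fixpoint Fcoef (n : nat) : int -> int -> rat :=
  match n with
  | 0 => fun i j => if (i == -1) && (j == -1) then 1 else 0
  | n'.+1 => fun i j =>
      Fcoef n' (i - 1) j + Fcoef n' (i + 1) j
      + Fcoef n' i (j - 1) + Fcoef n' i (j + 1)
      - (if i == -1 then Fcoef n' 0 j else 0)
      - (if j == -1 then Fcoef n' i 0 else 0)
  end.

(* a_n = [t^n] F(1,1,t): the sum of all coefficients of F_n.  F_n is a Laurent
   polynomial supported in the box |i|, |j| <= n+1 (start at (-1,-1), n unit
   steps), so summing over that box is the evaluation at x = y = 1. *)
Definition box (n : nat) (k : nat) : int := k%:Z - (n.+1)%:Z.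

Definition a (n : nat) : rat :=
  \sum_(k < (n.+1).*2.+1) \sum_(l < (n.+1).*2.+1) Fcoef n (box n k) (box n l).

(* Main.v *)
Require Import Defs.
From mathcomp Require Import all_boot all_order all_algebra.
From mathcomp Require Import ring lra zify.
Import GRing.Theory Num.Theory.
Local Open Scope ring_scope.

Fixpoint P (n : nat) (r : int) : rat :=
  match n with
  | 0 => if r == 0 then 1 else 0
  | n'.+1 => P n' (r - 1) + P n' (r + 1)
  end.

Lemma P_sym n r : P n (- r) = P n r.
Proof.
elim: n r => [|n IH] r /=; first by rewrite oppr_eq0.
rewrite (_ : -r - 1 = -(r+1)); last by ring.
rewrite (_ : -r + 1 = -(r-1)); last by ring.
by rewrite !IH addrC.
Qed.

Lemma P_vanish_pos n (r : int) : n%:Z < r -> P n r = 0.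
Proof.
elim: n r => [|n IH] r /= h; first by case: eqP => // e; lia.
rewrite !IH ?addr0 //; lia.
Qed.

Lemma P_vanish_neg n (r : int) : r < - n%:Z -> P n r = 0.
Proof. move=> h; rewrite -P_sym P_vanish_pos //; lia. Qed.

Lemma P_ratio n (r : int) :
  (n%:R + r%:~R + 2) * P n (r + 2) = (n%:R - r%:~R) * P n r.
Proof.
elim: n r => [|n IH] r /=.
  have [->|r0] := eqVneq r 0; first by rewrite /= subrr !mul0r.
  have [->|r2] := eqVneq r (-2).
    rewrite /= mulr0 mulr1 add0r (_ : (-2:int)%:~R = - 2 :> rat) ?addNr //.
  by case: (r + 2 =P 0) => e; [exfalso; lia | rewrite !mulr0].
have h1 := IH (r + 1). have h2 := IH (r - 1).
rewrite (_ : r + 1 + 2 = r + 2 + 1) in h1; last by ring.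
rewrite (_ : r - 1 + 2 = r + 2 - 1) in h2; last by ring.
rewrite (_ : r + 2 - 1 = r + 1) in h2 *; last by ring.
rewrite ?intrD ?intrB in h1 h2.
move: h1 h2; set a := P n (r - 1); set b := P n (r+1); set c := P n (r+2+1).
move=> h1 h2.
have eN : (n.+1%:R : rat) = n%:R + 1 by rewrite -addn1 natrD.
rewrite eN; rewrite (_ : (1:int)%:~R = 1 :> rat) // (_ : (-1:int)%:~R = -1 :> rat) // in h1 h2.
nra.
Qed.

Definition W n (p q : int) : rat := P n (p + q) * P n (p - q).

Lemma W_rec n p q : W n.+1 p q = W n (p-1) q + W n (p+1) q + W n p (q-1) + W n p (q+1).
Proof.
rewrite /W /=.
have -> : p - 1 + q = p + q - 1 by ring.
have -> : p - 1 - q = p - q - 1 by ring.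
have -> : p + 1 + q = p + q + 1 by ring.
have -> : p + 1 - q = p - q + 1 by ring.
have -> : p + (q - 1) = p + q - 1 by ring.
have -> : p - (q - 1) = p - q + 1 by ring.
have -> : p + (q + 1) = p + q + 1 by ring.
have -> : p - (q + 1) = p - q - 1 by ring.
ring.
Qed.

Lemma W_symx n p q : W n (- p) q = W n p q.
Proof.
rewrite /W (_ : - p + q = - (p - q)); last by ring.
rewrite (_ : - p - q = - (p + q)); last by ring.
by rewrite !P_sym mulrC.
Qed.

Lemma W_symy n p q : W n p (- q) = W n p q.
Proof. by rewrite /W opprK mulrC. Qed.

Lemma W_vanish_p n p q : n%:Z < p -> W n p q = 0.
Proof.
move=> h; rewrite /W.
have [hq|hq] := lerP 0 q.
  by rewrite P_vanish_pos ?mul0r //; lia.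
by rewrite (@P_vanish_pos n (p - q)) ?mulr0 //; lia.
Qed.

Lemma W_vanish_q n p q : n%:Z < q -> W n p q = 0.
Proof.
move=> h; rewrite /W.
have [hp|hp] := lerP 0 p.
  by rewrite P_vanish_pos ?mul0r //; lia.
by rewrite (@P_vanish_neg n (p - q)) ?mulr0 //; lia.
Qed.

Definition H (V : int -> int -> rat) (u v : int) : rat :=
  V u v - V (u + 2) v - V u (v + 2) + V (u + 2) (v + 2).

Definition Fform (V : int -> int -> rat) (i j : int) : rat :=
  H V `|i + 1| `|j + 1|.

Lemma Fform_ext V1 V2 i j : (forall p q, V1 p q = V2 p q) ->
  Fform V1 i j = Fform V2 i j.
Proof. by move=> e; rewrite /Fform /H !e. Qed.

Lemma Fform_add V1 V2 i j :
  Fform (fun p q => V1 p q + V2 p q) i j = Fform V1 i j + Fform V2 i j.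
Proof. rewrite /Fform /H; ring. Qed.

Lemma Tx (V : int -> int -> rat) (HV : forall p q, V (- p) q = V p q) i j :
  Fform V (i - 1) j + Fform V (i + 1) j - (if i == -1 then Fform V 0 j else 0)
  = Fform (fun p q => V (p - 1) q + V (p + 1) q) i j.
Proof.
rewrite /Fform /H; set v := `|j + 1|.
have [hi|hi] := lerP 0 i.
  rewrite (_ : i == -1 = false); last by apply/eqP; lia.
  rewrite subrK ger0_norm // ger0_norm; last by lia.
  rewrite ger0_norm; last by lia.
  have -> : i + 1 + 1 = i + 2 by ring.
  have -> : i + 1 - 1 = i by ring.
  have -> : i + 1 + 2 - 1 = i + 2 by ring.
  have -> : i + 1 + 2 + 1 = i + 2 + 2 by ring.
  ring.
have [e|ne] := eqVneq i (-1).
  rewrite e /=.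
  rewrite ?add0r ?sub0r ?addNr ?subrK ?normr0 ?normr1 ?normrN ?normr1 ?HV.
  rewrite (_ : (2:int) - 1 = 1); last by lia.
  rewrite (_ : (2:int) + 1 = 1 + 2); last by lia.
  ring.
rewrite ?subr0.
have n1 : `|i| = - i by apply: ler0_norm; lia.
have n2 : `|i + 1 + 1| = - (i + 1 + 1) by apply: ler0_norm; lia.
have n3 : `|i + 1| = - (i + 1) by apply: ler0_norm; lia.
rewrite subrK n1 n2 n3.
have -> : - (i + 1 + 1) = - (i + 1) - 1 by ring.
have -> : - i = - (i + 1) + 1 by ring.
set w := - (i + 1).
have -> : w + 2 - 1 = w + 1 by ring.
have -> : w + 2 + 1 = w + 1 + 2 by ring.
have -> : w - 1 + 2 = w + 1 by ring.
ring.
Qed.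

Lemma Fform_T V i j : Fform V i j = Fform (fun p q => V q p) j i.
Proof. rewrite /Fform /H /=; ring. Qed.

Lemma Ty (V : int -> int -> rat) (HV : forall p q, V p (- q) = V p q) i j :
  Fform V i (j - 1) + Fform V i (j + 1) - (if j == -1 then Fform V i 0 else 0)
  = Fform (fun p q => V p (q - 1) + V p (q + 1)) i j.
Proof.
rewrite (Fform_T V i (j-1)) (Fform_T V i (j+1)) (Fform_T V i 0).
rewrite (@Tx (fun p q => V q p)); last by move=> p q; rewrite HV.
by rewrite Fform_T.
Qed.

Lemma W0 p q : W 0 p q = if (p == 0) && (q == 0) then 1 else 0.
Proof.
rewrite /W /=.
case: (p + q =P 0) => h1; case: (p - q =P 0) => h2; case: (p =P 0) => h3;
  case: (q =P 0) => h4 /=; rewrite ?mul1r ?mul0r ?mulr0 //; exfalso; lia.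
Qed.

Lemma Fcoef_W n i j : Fcoef n i j = Fform (W n) i j.
Proof.
elim: n i j => [|n IH] i j.
  rewrite /Fform /H !W0 /=.
  have hu : 0 <= `|i + 1| by [].
  have hv : 0 <= `|j + 1| by [].
  rewrite (_ : `|i + 1| + 2 == 0 = false); last by apply/eqP; lia.
  rewrite (_ : `|j + 1| + 2 == 0 = false); last by apply/eqP; lia.
  rewrite normr_eq0 normr_eq0 !andbF /= !subr0 ?addr0.
  rewrite (_ : (i + 1 == 0) = (i == -1)); last by apply/eqP/eqP; lia.
  by rewrite (_ : (j + 1 == 0) = (j == -1)); last by apply/eqP/eqP; lia.
rewrite /= !IH.
rewrite (@Fform_ext _ _ i j (W_rec n)).
rewrite (@Fform_ext _ (fun p q => (W n (p - 1) q + W n (p + 1) q)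
   + (W n p (q - 1) + W n p (q + 1))) i j); last by move=> p q; ring.
rewrite Fform_add -Tx; last exact: W_symx.
rewrite -Ty; last exact: W_symy.
by case: (i == -1); case: (j == -1); rewrite /=; ring.
Qed.

Lemma tele_nat (f : nat -> rat) M :
  \sum_(i < M) (f i - f i.+2) = f 0%N + f 1%N - f M - f M.+1.
Proof.
elim: M => [|M IH]; first by rewrite big_ord0; ring.
by rewrite big_ord_recr /= IH; ring.
Qed.

Lemma tele_box n (phi : int -> rat) (Hphi : forall r, n%:Z < r -> phi r = 0) :
  \sum_(k < (n.+1).*2.+1) (phi `|box n k + 1| - phi (`|box n k + 1| + 2))
  = phi (Posz 0) + 2 * phi (Posz 1) + phi (Posz 2).
Proof.
rewrite (_ : (n.+1).*2.+1 = n + n.+3)%N; last by lia.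
rewrite big_split_ord /=.
rewrite (reindex_inj rev_ord_inj) /=.
rewrite (eq_bigr (fun i : 'I_n => phi (Posz i.+1) - phi (Posz i.+3))); last first.
  move=> i _; rewrite /= (_ : box n (n - i.+1) + 1 = - Posz i.+1).
    by rewrite normrN (_ : Posz i.+1 + 2 = Posz i.+3) //; lia.
  have := ltn_ord i; rewrite /box; lia.
rewrite (eq_bigr (fun i : 'I_n.+3 => phi (Posz i) - phi (Posz i.+2))); last first.
  move=> i _; rewrite /= (_ : box n (n + i) + 1 = Posz i).
    by rewrite (_ : Posz i + 2 = Posz i.+2) //; lia.
  rewrite /box; lia.
rewrite (tele_nat (fun i => phi (Posz i.+1))) (tele_nat (fun i => phi (Posz i))).
rewrite (Hphi (Posz n.+1)) ?(Hphi (Posz n.+2)) ?(Hphi (Posz n.+3)) ?(Hphi (Posz n.+4)); try lia.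
ring.
Qed.

Definition chi n (u : int) : rat :=
  W n u (Posz 0) + 2 * W n u (Posz 1) + W n u (Posz 2).

Lemma a_formula n : a n = chi n (Posz 0) + 2 * chi n (Posz 1) + chi n (Posz 2).
Proof.
rewrite /a.
rewrite (eq_bigr (fun k : 'I_(n.+1).*2.+1 =>
   chi n `|box n k + 1| - chi n (`|box n k + 1| + 2))); last first.
  move=> k _.
  set U := `|box n k + 1|.
  rewrite (eq_bigr (fun l : 'I_(n.+1).*2.+1 =>
     (fun v => W n U v - W n (U + 2) v) `|box n l + 1|
     - (fun v => W n U v - W n (U + 2) v) (`|box n l + 1| + 2))); last first.
    by move=> l _; rewrite Fcoef_W /Fform /H /=; ring.
  rewrite (@tele_box n (fun v => W n U v - W n (U + 2) v)) /chi; first by ring.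
  by move=> r hr /=; rewrite !W_vanish_q ?subrr.
apply: tele_box => r hr; rewrite /chi !W_vanish_p //; ring.
Qed.

Lemma W_nat n (s t : nat) : W n (Posz s) (Posz t) =
  P n (Posz (s + t)) * P n (Posz (if (t <= s)%N then (s - t)%N else (t - s)%N)).
Proof.
rewrite /W (_ : Posz s + Posz t = Posz (s + t)); last by lia.
case: leqP => h.
  by rewrite (_ : Posz s - Posz t = Posz (s - t)) //; lia.
by rewrite -(P_sym n (Posz s - Posz t)) (_ : - (Posz s - Posz t) = Posz (t - s)) //; lia.
Qed.

Lemma a_P m : a m =
  P m (Posz 0) ^+ 2 + 4 * P m (Posz 1) ^+ 2 + 2 * P m (Posz 2) ^+ 2
  + 4 * P m (Posz 0) * P m (Posz 2) + 4 * P m (Posz 1) * P m (Posz 3)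
  + P m (Posz 0) * P m (Posz 4).
Proof. rewrite a_formula /chi !W_nat /=; ring. Qed.

Lemma P_succS n k : P n.+1 (Posz k.+1) = P n (Posz k) + P n (Posz k.+2).
Proof.
rewrite /= (_ : Posz k.+1 - 1 = Posz k); last by lia.
by rewrite (_ : Posz k.+1 + 1 = Posz k.+2) //; lia.
Qed.

Lemma P_succ0 n : P n.+1 (Posz 0) = 2 * P n (Posz 1).
Proof.
rewrite /= (_ : Posz 0 - 1 = - Posz 1) // (_ : Posz 0 + 1 = Posz 1) //.
rewrite P_sym; ring.
Qed.

Lemma P_ratio_nat n k :
  P n (Posz k.+2) = (n%:R - k%:R) / (n + k.+2)%:R * P n (Posz k).
Proof.
have nz : (n + k.+2)%:R != 0 :> rat by rewrite pnatr_eq0 addnS.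
have h := P_ratio n (Posz k).
rewrite (_ : Posz k + 2 = Posz k.+2) in h; last by lia.
rewrite (_ : n%:R + (Posz k)%:~R + 2 = (n + k.+2)%:R :> rat) in h; last first.
  rewrite -[(Posz k)%:~R]/(k%:R : rat) -!natrD; congr (_%:R); lia.
rewrite -[P n (Posz k.+2)](mulKf nz) h /=; ring.
Qed.

Theorem mainTheorem5 (n : nat) :
  (n%:R + 2) * (n%:R + 4) * (n%:R + 6) * (n%:R ^+ 2 + 2 * n%:R - 1) * a n.+2
  - 4 * (n%:R + 3) * (2 * n%:R ^+ 3 + 9 * n%:R ^+ 2 + 4 * n%:R - 18) * a n.+1
  - 16 * (n%:R + 1) * (n%:R + 2) * (n%:R + 3) * (n%:R ^+ 2 + 4 * n%:R + 2) * a n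
  = 0 :> rat.
Proof.
rewrite !a_P ?P_succS ?P_succ0 ?P_succS ?P_succ0.
rewrite !P_ratio_nat.
rewrite !natrD.

have h k : (n%:R + k.+1%:R : rat) != 0 by rewrite -natrD pnatr_eq0 addnS.
field; by rewrite !h.
Qed.
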